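(* Let $I\subset F$ be a two-sided ideal generated by a finite set of monomials $\{v_k\}\subset W$, let $d=\max_k\deg v_k$, and $A=F/I$. Let $w\in W\setminus I$, $\Delta=\deg w$, and $\varphi:A[-\Delta]\to A$ the graded right $A$-module homomorphism $1\mapsto w+I$. Then $K=\mathrm{Ker}\,\varphi$ is a finitely generated monomial right ideal (generated by cosets of monomials), and every element of a minimal monomial basis of $K$ has degree (in the grading of $A[-\Delta]$) at most $\Delta+d-1$.
   Context: $\mathbb K$ is a field, $F=\mathbb K\langle x_1,\dots,x_n\rangle$ the free associative algebra with standard grading, $W$ its set of monomials (words). $A[-\Delta]$ denotes $A$ with grading $A[-\Delta]_e=A_{e-\Delta}$, so an element $f$ of $A$ homogeneous of degree $e$ has degree $\Delta+e$ in $A[-\Delta]$. *)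

(* Defs.v *)
From HB Require Import structures.
From mathcomp Require Import all_boot all_order all_algebra.
Set Implicit Arguments. Unset Strict Implicit. Unset Printing Implicit Defensive.
Import GRing.Theory.
Local Open Scope ring_scope.

(* Words (monomials) in the letters x_1..x_n, represented as 'I_n. *)
Definition word (n : nat) := seq 'I_n.

(* An element of the free algebra F = K<x_1..x_n> is given by a finite formal
   linear combination of words; two such expressions denote the same element
   iff their coefficient functions agree. *)
Definition fpoly (R : fieldType) (n : nat) := seq (R * word n).

Definition coef (R : fieldType) n (p : fpoly R n) (u : word n) : R :=
  \sum_(x <- p | x.2 == u) x.1.

Definition feq (R : fieldType) n (p q : fpoly R n) : Prop :=
  forall u, coef p u = coef q u.

Definition fmono (R : fieldType) n (u : word n) : fpoly R n := [:: (1, u)].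

Definition fadd (R : fieldType) n (p q : fpoly R n) : fpoly R n := p ++ q.
Definition fopp (R : fieldType) n (p : fpoly R n) : fpoly R n :=
  [seq (- x.1, x.2) | x <- p].
Definition fmul (R : fieldType) n (p q : fpoly R n) : fpoly R n :=
  [seq (x.1 * y.1, x.2 ++ y.2) | x <- p, y <- q].

(* f lies in the two-sided ideal I of F generated by the monomials in V:
   f is a finite sum of terms c * a v b with v in V, a b words. *)
Definition inI (R : fieldType) n (V : seq (word n)) (f : fpoly R n) : Prop :=
  exists t : seq (R * word n * word n * word n),
    (forall x, x \in t -> x.1.2 \in V) /\
    feq f [seq (x.1.1.1, x.1.1.2 ++ x.1.2 ++ x.2) | x <- t].

(* Kernel of phi : A[-Delta] -> A, a |-> (w + I) a, described as the
   preimage in F (f + I lies in K iff w f lies in I). *)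
Definition inKer (R : fieldType) n (V : seq (word n)) (w : word n)
  (f : fpoly R n) : Prop :=
  inI V (fmul (fmono R w) f).

(* f + I lies in the right ideal of A = F/I generated by the cosets of the
   monomials in S: f = sum c * s b  (mod I) with s in S. *)
Definition inRgen (R : fieldType) n (V S : seq (word n)) (f : fpoly R n) : Prop :=
  exists t : seq (R * word n * word n),
    (forall x, x \in t -> x.1.2 \in S) /\
    inI V (fadd f (fopp [seq (x.1.1, x.1.2 ++ x.2) | x <- t])).

Definition generatesKer (R : fieldType) n (V : seq (word n)) (w : word n)
  (S : seq (word n)) : Prop :=
  forall f : fpoly R n, inKer V w f <-> inRgen V S f.

Definition minimalMonomialBasis (R : fieldType) n (V : seq (word n)) (w : word n)
  (S : seq (word n)) : Prop :=
  generatesKer R V w S /\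
  forall s, s \in S -> ~ generatesKer R V w [seq y <- S | y != s].

(* Main.v *)
Require Import Defs.
From mathcomp Require Import all_boot all_order all_algebra.
From mathcomp Require Import zify.
Import GRing.Theory.
Local Open Scope ring_scope.

Section Helpers.
Variables (R : fieldType) (n : nat) (V : seq (word n)).

Definition hasfac (u : word n) : bool := has (fun v => infix v u) V.
Definition Iw (p : fpoly R n) : Prop := forall u, coef p u != 0 -> hasfac u.

Lemma coef_nil u : coef ([::] : fpoly R n) u = 0.
Proof. by rewrite /coef big_nil. Qed.

Lemma coef_cons x (p : fpoly R n) u :
  coef (x :: p) u = (if x.2 == u then x.1 else 0) + coef p u.
Proof. by rewrite /coef big_cons; case: ifP => // _; rewrite add0r. Qed.

Lemma coef_fadd (p q : fpoly R n) u : coef (fadd p q) u = coef p u + coef q u.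
Proof. by rewrite /coef /fadd big_cat. Qed.

Lemma coef_fopp (p : fpoly R n) u : coef (fopp p) u = - coef p u.
Proof. by rewrite /coef /fopp big_map sumrN. Qed.

Lemma coef_fmono (v u : word n) : coef (fmono R v) u = if v == u then 1 else 0.
Proof. by rewrite /fmono coef_cons coef_nil addr0. Qed.

Lemma sum_neq0 (T : eqType) (s : seq T) (P : pred T) (F : T -> R) :
  \sum_(x <- s | P x) F x != 0 -> exists2 x, x \in s & P x.
Proof.
elim: s => [|x s IH]; first by rewrite big_nil eqxx.
rewrite big_cons; case: ifP => Px H.
  by exists x => //; rewrite mem_head.
by have [y ys Py] := IH H; exists y => //; rewrite in_cons ys orbT.
Qed.

Lemma addr_neq0 (a b : R) : a + b != 0 -> a != 0 \/ b != 0.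
Proof.
case: (eqVneq a 0) => [->|]; last by left.
by rewrite add0r; right.
Qed.

Lemma eq_catl (w a b : word n) : (w ++ a == w ++ b) = (a == b).
Proof. by elim: w => //= z w IH; rewrite eqseq_cons eqxx. Qed.

Lemma coef_wmul (w : word n) (f : fpoly R n) x :
  coef (fmul (fmono R w) f) x = \sum_(y <- f | w ++ y.2 == x) y.1.
Proof.
rewrite /fmul /fmono /= cats0 /coef big_map.
by apply: eq_bigr => y _ /=; rewrite mul1r.
Qed.

Lemma coef_wmul_cat (w : word n) (f : fpoly R n) u :
  coef (fmul (fmono R w) f) (w ++ u) = coef f u.
Proof. by rewrite coef_wmul /coef; apply: eq_bigl => y; rewrite eq_catl. Qed.

Lemma sum_uniq1 (L : seq (word n)) (g : word n -> R) y : uniq L ->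
  \sum_(u <- L | u == y) g u = if y \in L then g y else 0.
Proof.
elim: L => [|u L IH]; first by rewrite big_nil.
rewrite /= => /andP [uL uq]; rewrite big_cons IH // in_cons.
case: (eqVneq u y) => [<-|] /=; first by rewrite (negbTE uL) addr0.
by [].
Qed.

Lemma coef_notin (f : fpoly R n) y : y \notin unzip2 f -> coef f y = 0.
Proof.
move=> yn; rewrite /coef big1_seq // => x /andP [/eqP xy xf].
by move: yn; rewrite -xy (map_f snd xf).
Qed.

Lemma coef_undup (f : fpoly R n) y :
  coef f y = \sum_(u <- undup (unzip2 f) | u == y) coef f u.
Proof.
rewrite sum_uniq1 ?undup_uniq // mem_undup.
by case: ifP => // /negbT /coef_notin.
Qed.

Definition termsI (t : seq (R * word n * word n * word n)) : fpoly R n :=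
  [seq (x.1.1.1, x.1.1.2 ++ x.1.2 ++ x.2) | x <- t].

Lemma build_I (L : seq (word n)) (g : word n -> R) :
  (forall u, u \in L -> g u != 0 -> hasfac u) ->
  exists t, (forall x, x \in t -> x.1.2 \in V) /\
    forall y, coef (termsI t) y = \sum_(u <- L | u == y) g u.
Proof.
elim: L => [|u L IH] H.
  by exists [::]; split => // y; rewrite big_nil coef_nil.
have [t [tV tc]] : exists t, (forall x, x \in t -> x.1.2 \in V) /\
    forall y, coef (termsI t) y = \sum_(u <- L | u == y) g u.
  by apply: IH => v vL; apply: H; rewrite in_cons vL orbT.
case: (eqVneq (g u) 0) => gu.
  exists t; split => // y; rewrite big_cons tc; case: ifP => // _.
  by rewrite gu add0r.
have := H u (mem_head _ _) gu => /hasP [v vV /infixP [a [b uab]]].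
exists ((g u, a, v, b) :: t); split.
  by move=> x; rewrite in_cons => /orP [/eqP -> //|]; apply: tV.
move=> y; rewrite /termsI /= coef_cons /= -uab big_cons -tc /termsI.
by case: ifP => // _; rewrite add0r.
Qed.

Lemma inI_Iw (f : fpoly R n) : inI V f <-> Iw f.
Proof.
split.
  move=> [t [tV tf]] u; rewrite tf /coef big_map /= => /sum_neq0 [x xt /eqP xu].
  apply/hasP; exists x.1.2; first by apply: tV.
  by apply/infixP; exists x.1.1.2, x.2.
move=> H.
have [t [tV tc]] := build_I (undup (unzip2 f)) (coef f)
   (fun u _ cu => H u cu).
by exists t; split => // y; rewrite tc -coef_undup.
Qed.


Lemma hasfac_catl a u : hasfac u -> hasfac (a ++ u).
Proof. by move/hasP => [v vV vu]; apply/hasP; exists v => //; apply: infix_catl. Qed.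

Lemma hasfac_catr u b : hasfac u -> hasfac (u ++ b).
Proof. by move/hasP => [v vV vu]; apply/hasP; exists v => //; apply: infix_catr. Qed.

Lemma inKer_iff (w : word n) (f : fpoly R n) :
  inKer V w f <-> forall u, coef f u != 0 -> hasfac (w ++ u).
Proof.
split.
  by move/inI_Iw => H u cu; apply: H; rewrite coef_wmul_cat.
move=> H; apply/inI_Iw => x.
case: (boolP (prefix w x)) => [/prefixP [u ->]|np].
  by rewrite coef_wmul_cat; apply: H.
rewrite coef_wmul big1_seq ?eqxx // => y /andP [/eqP yx _].
by move: np; rewrite -yx prefix_prefix.
Qed.

Definition termsR (t : seq (R * word n * word n)) : fpoly R n :=
  [seq (x.1.1, x.1.2 ++ x.2) | x <- t].

Lemma inRgen_iff (S : seq (word n)) (f : fpoly R n) :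
  inRgen V S f <-> exists t, (forall x, x \in t -> x.1.2 \in S) /\
     forall y, coef f y - coef (termsR t) y != 0 -> hasfac y.
Proof.
split.
  move=> [t [tS /inI_Iw H]]; exists t; split => // y.
  by move: (H y); rewrite coef_fadd coef_fopp.
move=> [t [tS H]]; exists t; split => //; apply/inI_Iw => y.
by rewrite coef_fadd coef_fopp; apply: H.
Qed.

Lemma RK (w : word n) S (f : fpoly R n) :
  (forall s, s \in S -> hasfac (w ++ s)) -> inRgen V S f -> inKer V w f.
Proof.
move=> HS /inRgen_iff [t [tS tc]]; apply/inKer_iff => u cu.
have := cu; rewrite -(subrK (coef (termsR t) u) (coef f u)) => /addr_neq0 [].
  by move/tc; apply: hasfac_catl.
rewrite /coef big_map /= => /sum_neq0 [x xt /eqP <-].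
by rewrite catA; apply: hasfac_catr; apply: HS; apply: tS.
Qed.

Local Notation dd := (\max_(v <- V) size v)%N.

Lemma split_fac (w u : word n) : hasfac (w ++ u) ->
  hasfac u \/ exists2 k, (k < dd)%N & hasfac (w ++ take k u).
Proof.
move/hasP => [v vV /infixP [a [b E]]].
have vd : (size v <= dd)%N by apply: (@leq_bigmax_seq _ V xpredT size v vV).
case: (leqP (size w) (size a)) => Ha.
  left.
  have wa : take (size w) a = w.
    by rewrite -(takel_cat (v ++ b) Ha) -E take_size_cat.
  have aw : a = w ++ drop (size w) a by rewrite -{1}wa cat_take_drop.
  have : w ++ u = w ++ (drop (size w) a ++ v ++ b).
    by rewrite E {1}aw -catA.
  move/eqP; rewrite eq_catl => /eqP ->.
  by apply/hasP; exists v => //; apply/infixP; exists (drop (size w) a), b.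
case: (eqVneq v [::]) => [v0|vn].
  by left; apply/hasP; exists v => //; rewrite v0 infix0s.
have v0 : (0 < size v)%N by rewrite lt0n size_eq0.
right; exists (size a + size v - size w)%N; first by lia.
have -> : w ++ take (size a + size v - size w) u =
          take (size w + (size a + size v - size w)) (w ++ u).
  by rewrite take_cat ltnNge leq_addr /= addKn.
rewrite E catA take_cat size_cat.
have -> : (size w + (size a + size v - size w) < size a + size v)%N = false.
  by apply/negbTE; rewrite -leqNgt; lia.
apply/hasP; exists v => //; apply: infix_catr; apply: suffix_infix.
Qed.

Fixpoint allw (k : nat) : seq (word n) :=
  if k is k'.+1 then [::] :: [seq i :: s | i <- enum 'I_n, s <- allw k']
  else [:: [::]].

Lemma mem_allw k (s : word n) : (size s <= k)%N -> s \in allw k.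
Proof.
elim: k s => [|k IH] [|i s] //=; try by rewrite ?mem_head ?inE.
rewrite ltnS => hs; rewrite in_cons; apply/orP; right.
by apply: (allpairs_f (fun i0 s0 => i0 :: s0)); [rewrite mem_enum | apply: IH].
Qed.

Definition S0 (w : word n) := [seq u <- allw dd | hasfac (w ++ u)].

Lemma build_R (w : word n) (L : seq (word n)) (g : word n -> R) :
  (forall u, u \in L -> g u != 0 -> hasfac (w ++ u)) ->
  exists t, (forall x, x \in t -> x.1.2 \in S0 w) /\
    forall y, \sum_(u <- L | u == y) g u - coef (termsR t) y != 0 -> hasfac y.
Proof.
elim: L => [|u L IH] H.
  by exists [::] => //; split => // y; rewrite big_nil coef_nil subrr eqxx.
have [t [tS tc]] : exists t, (forall x, x \in t -> x.1.2 \in S0 w) /\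
    forall y, \sum_(u <- L | u == y) g u - coef (termsR t) y != 0 -> hasfac y.
  by apply: IH => v vL; apply: H; rewrite in_cons vL orbT.
case: (eqVneq (g u) 0) => gu.
  exists t; split => // y; rewrite big_cons; case: ifP => _; last exact: tc.
  by rewrite gu add0r; apply: tc.
case: (boolP (hasfac u)) => hu.
  exists t; split => // y; rewrite big_cons.
  by case: (eqVneq u y) => [<- //|_]; apply: tc.
case: (@split_fac w u (H u (mem_head u L) gu)) => [hu'|[k kd hk]].
  by rewrite hu' in hu.
exists ((g u, take k u, drop k u) :: t); split.
  move=> x; rewrite in_cons => /orP [/eqP -> /=|]; last by apply: tS.
  rewrite mem_filter hk /=; apply: mem_allw.
  have : (size (take k u) <= k)%N.
    by rewrite size_take; case: ifP => // /negbT; rewrite -leqNgt.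
  by move=> h; apply: leq_trans h (ltnW kd).
move=> y; rewrite /termsR /= coef_cons /= cat_take_drop -/(termsR t) big_cons.
case: ifP => _; last by rewrite add0r; apply: tc.
by rewrite opprD addrACA subrr add0r; apply: tc.
Qed.

Lemma part1 (w : word n) : generatesKer R V w (S0 w).
Proof.
move=> f; split.
  move/inKer_iff => H.
  have [t [tS tc]] := @build_R w (undup (unzip2 f)) (coef f) (fun u _ => H u).
  apply/inRgen_iff; exists t; split => // y; rewrite [coef f y]coef_undup; exact: tc.
by apply: RK => s; rewrite mem_filter => /andP [].
Qed.

Lemma KS (w : word n) S s : generatesKer R V w S -> s \in S -> hasfac (w ++ s).
Proof.
move=> G sS.
have : inKer V w (fmono R s).
  apply/G; apply/inRgen_iff; exists [:: (1, s, [::])]; split.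
    by move=> x; rewrite mem_seq1 => /eqP ->.
  by move=> y; rewrite coef_fmono /termsR /= coef_cons coef_nil cats0 addr0 subrr eqxx.
by move/inKer_iff; apply; rewrite coef_fmono eqxx oner_neq0.
Qed.

Arguments KS [w S s].

Lemma drop_gen (w : word n) S u : generatesKer R V w S ->
  (hasfac u \/ exists s r, s \in S /\ s != u /\ u = s ++ r) ->
  generatesKer R V w [seq y <- S | y != u].
Proof.
move=> G C f; split; last first.
  by apply: RK => s; rewrite mem_filter => /andP [_ sS]; apply: (KS G sS).
move/G/inRgen_iff => [t [tS tc]]; apply/inRgen_iff.
case: C => [hu | [s0 [r [s0S [s0u us]]]]].
  exists [seq x <- t | x.1.2 != u]; split.
    by move=> x; rewrite !mem_filter => /andP [xu xt]; rewrite xu (tS _ xt).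
  move=> y.
  have E : coef (termsR t) y = coef (termsR [seq x <- t | x.1.2 != u]) y +
      \sum_(x <- t | (x.1.2 ++ x.2 == y) && (x.1.2 == u)) x.1.1.
    rewrite /coef !big_map /= big_filter_cond (bigID (fun x => x.1.2 == u)) /=.
    by rewrite addrC; congr (_ + _); apply: eq_bigl => x; rewrite andbC.
  have -> : coef f y - coef (termsR [seq x <- t | x.1.2 != u]) y =
      (coef f y - coef (termsR t) y) +
      \sum_(x <- t | (x.1.2 ++ x.2 == y) && (x.1.2 == u)) x.1.1.
    by rewrite E opprD addrA subrK.
  move/addr_neq0 => [/tc //|/sum_neq0 [x xt /andP [/eqP <- /eqP ->]]].
  by apply: hasfac_catr.
exists [seq (if x.1.2 == u then (x.1.1, s0, r ++ x.2) else x) | x <- t]; split.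
  move=> x /mapP [x0 x0t ->]; case: ifP => [_|/negbT xn] /=.
    by rewrite mem_filter s0u s0S.
  by rewrite mem_filter xn tS.
have -> : termsR [seq (if x.1.2 == u then (x.1.1, s0, r ++ x.2) else x) | x <- t]
          = termsR t.
  rewrite /termsR -map_comp; apply: eq_map => x /=.
  by case: ifP => // /eqP xu /=; rewrite catA -us xu.
exact: tc.
Qed.

Lemma pre_fac (w : word n) S u : generatesKer R V w S -> (dd <= size u)%N ->
  hasfac (w ++ u) -> hasfac u \/ exists s r, s \in S /\ s != u /\ u = s ++ r.
Proof.
move=> G du /split_fac [hu|[k kd hk]]; first by left.
have : inKer V w (fmono R (take k u)).
  apply/inKer_iff => y; rewrite coef_fmono; case: (eqVneq (take k u) y) => [<- _|_]; first exact: hk.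
  by rewrite eqxx.
move/G/inRgen_iff => [t [tS tc]].
case: (boolP (hasfac (take k u))) => hu'.
  by left; rewrite -(cat_take_drop k u); apply: hasfac_catr.
have c0 : coef (termsR t) (take k u) != 0.
  apply/negP => /eqP c0; move: (tc (take k u)).
  rewrite coef_fmono eqxx c0 subr0 oner_neq0 => /(_ isT).
  by rewrite (negbTE hu').
move: c0; rewrite /coef big_map /= => /sum_neq0 [x xt /eqP xu'].
right; exists x.1.2, (x.2 ++ drop k u); split; first by apply: tS.
split; last by rewrite catA xu' cat_take_drop.
apply/eqP => E.
have h1 : size (x.1.2 ++ x.2) = size (take k u) by rewrite xu'.
have h2 : (size (take k u) <= k)%N.
  by rewrite size_take; case: ifP => // /negbT; rewrite -leqNgt.
move: h1; rewrite size_cat E => h1.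
have h3 : (size u <= size (take k u))%N by rewrite -h1 leq_addr.
have := leq_trans du (leq_trans h3 h2).
by rewrite leqNgt kd.
Qed.

End Helpers.

Theorem mainTheorem14 (R : fieldType) (n : nat) (V : seq (word n)) (w : word n) :
  ~ inI V (fmono R w) ->
  (exists S : seq (word n), generatesKer R V w S) /\
  (forall S : seq (word n), minimalMonomialBasis R V w S ->
     forall u, u \in S ->
       (size w + size u <= size w + \max_(v <- V) size v - 1)%N).
Proof.
move=> _; split; first by exists (@S0 n V w); apply: part1.
move=> S [G Hmin] u uS.
have hk := @KS R n V w S u G uS.
case: (ltnP (size u) (\max_(v <- V) size v)%N) => h; first by lia.
exfalso; apply: (Hmin u uS); apply: (@drop_gen R n V w S u G).
exact: (@pre_fac R n V w S u G h hk).
Qed.
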